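(* Let $k\ge 2$ and let $P\subset\mathbb{R}^k$ be a finite point set with properties $a_1,\dots,a_k\colon P\to\{-1,1\}$, each strictly linearly separable on $P$, such that all $2^k$ possible labels occur in $P$. For $i=2,\dots,k$ let $H_i$ be a hyperplane strictly separating $P^i_-$ from $P^i_+$, with normal $v_i$. Then for every unit vector $w\in\mathbb{R}^k$ with $w\cdot v_i=0$ for all $i=2,\dots,k$, the projected sets $P'_-$ and $P'_+$ are not strictly linearly separable in $w^\perp$.
   Context: $P^i_{\pm}=\{p\in P: a_i(p)=\pm1\}$, $P_\pm=P^1_\pm$; the label of $p$ is $(a_1(p),\dots,a_k(p))$. Projection along a unit vector $w$: $p'=p-(p\cdot w)w$, and $X'$ denotes the image of $X$. Finite sets $X,Y$ in a linear subspace $L$ are strictly linearly separable (in $L$) if there exist a unit $v\in L$ and $c\in\mathbb{R}$ with $v\cdot x<c<v\cdot y$ for all $x\in X$, $y\in Y$. *)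

(* Defs.v *)
From HB Require Import structures.
From mathcomp Require Import all_boot all_order all_algebra.
From mathcomp Require Import reals.
Set Implicit Arguments. Unset Strict Implicit. Unset Printing Implicit Defensive.
Import Order.TTheory GRing.Theory Num.Theory.
Local Open Scope ring_scope.

Definition dot (R : realType) (k : nat) (u v : 'rV[R]_k) : R :=
  \sum_(i < k) u 0 i * v 0 i.

Definition proj (R : realType) (k : nat) (w p : 'rV[R]_k) : 'rV[R]_k :=
  p - (dot p w) *: w.

(* X and Y (finite sets, given as sequences) are strictly linearly separable
   in the linear subspace L (given as a predicate on R^k):
   some unit v in L and c with v.x < c < v.y for all x in X, y in Y. *)
Definition strict_lin_sep (R : realType) (k : nat) (L : 'rV[R]_k -> Prop)
  (X Y : seq 'rV[R]_k) : Prop :=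
  exists (v : 'rV[R]_k) (c : R),
    [/\ L v, dot v v = 1,
        (forall x, x \in X -> dot v x < c) &
        (forall y, y \in Y -> c < dot v y)].

(* P^i_- and P^i_+ ; properties are int-valued, index i : 'I_k (i = 0 is a_1) *)
Definition Pminus (R : realType) (k : nat) (a : 'I_k -> 'rV[R]_k -> int)
  (P : seq 'rV[R]_k) (i : 'I_k) : seq 'rV[R]_k :=
  [seq p <- P | a i p == -1].
Definition Pplus (R : realType) (k : nat) (a : 'I_k -> 'rV[R]_k -> int)
  (P : seq 'rV[R]_k) (i : 'I_k) : seq 'rV[R]_k :=
  [seq p <- P | a i p == 1].

Definition hyperplane_strictly_separates (R : realType) (k : nat)
  (v : 'rV[R]_k) (c : R) (X Y : seq 'rV[R]_k) : Prop :=
  v != 0 /\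
  (((forall x, x \in X -> dot v x < c) /\ (forall y, y \in Y -> c < dot v y)) \/
   ((forall x, x \in X -> c < dot v x) /\ (forall y, y \in Y -> dot v y < c))).

(* Main.v *)
Require Import Defs.
From HB Require Import structures.
From mathcomp Require Import all_boot all_order all_algebra.
From mathcomp Require Import reals.
Import Order.TTheory GRing.Theory Num.Theory.
Local Open Scope ring_scope.

Lemma dotC (R : realType) (k : nat) (u v : 'rV[R]_k) : dot u v = dot v u.
Proof. by rewrite /dot; apply: eq_bigr => i _; rewrite mulrC. Qed.

Lemma dot_proj (R : realType) (k : nat) (u w p : 'rV[R]_k) :
  dot u w = 0 -> dot u (proj w p) = dot u p.
Proof.
move=> uw; rewrite /proj /dot.
under eq_bigr do rewrite !mxE mulrBr.
rewrite sumrB; under [X in _ - X]eq_bigr do rewrite mulrCA.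
by rewrite -big_distrr /= -/(dot u w) uw mulr0 subr0.
Qed.

Lemma dep (R : fieldType) k (M : 'M[R]_k) (w : 'cV_k) :
  w != 0 -> M *m w = 0 -> exists2 x : 'rV_k, x != 0 & x *m M = 0.
Proof.
move=> wn0 Mw; apply/det0P.
rewrite -[_ == 0]negbK -unitfE -unitmxE; apply/negP => Mu.
by move: wn0; rewrite -(mulKmx Mu w) Mw mulmx0 eqxx.
Qed.

Lemma pt (R : realType) (m h : R) : (0 <= m -> 0 < h) -> (m < 0 -> h < 0) ->
  m != 0 -> 0 < m * h.
Proof.
move=> H1 H2 mn0; case: (ltrgtP m 0) => [mlt|mgt|me].
- by rewrite nmulr_rgt0 //; exact: H2.
- by rewrite pmulr_rgt0 //; apply: H1; exact: ltW.
- by rewrite me eqxx in mn0.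
Qed.

Lemma pt0 (R : realType) (m h : R) : (0 <= m -> 0 < h) -> (m < 0 -> h < 0) ->
  0 <= m * h.
Proof.
move=> H1 H2; have [->|mn0] := eqVneq m 0; first by rewrite mul0r.
exact/ltW/pt.
Qed.

Lemma sum_pos (R : realType) k (F : 'I_k -> R) j :
  (forall i, 0 <= F i) -> 0 < F j -> 0 < \sum_i F i.
Proof.
move=> F0 Fj; rewrite (bigD1 j) //=; apply: (lt_le_trans Fj).
by rewrite lerDl; apply: sumr_ge0 => i _; exact: F0.
Qed.

Theorem mainTheorem4 (R : realType) (k : nat) (hk : (2 <= k)%N)
  (P : seq 'rV[R]_k) (a : 'I_k -> 'rV[R]_k -> int)
  (ha : forall i p, p \in P -> a i p = 1 \/ a i p = -1)
  (hsep : forall i, strict_lin_sep (fun _ => True) (Pminus a P i) (Pplus a P i))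
  (hlabels : forall s : 'I_k -> bool, exists2 p, p \in P &
       forall i, a i p = (if s i then 1 else -1))
  (v : 'I_k -> 'rV[R]_k) (c : 'I_k -> R)
  (hH : forall i : 'I_k, (0 < i)%N ->
       hyperplane_strictly_separates (v i) (c i) (Pminus a P i) (Pplus a P i))
  (w : 'rV[R]_k) (hw : dot w w = 1)
  (hwv : forall i : 'I_k, (0 < i)%N -> dot w (v i) = 0) :
  ~ strict_lin_sep (fun u => dot u w = 0)
      [seq proj w p | p <- Pminus a P (Ordinal (leq_trans (isT : (0 < 2)%N) hk))]
      [seq proj w p | p <- Pplus a P (Ordinal (leq_trans (isT : (0 < 2)%N) hk))].
Proof.
move=> [u [c0 [uw uu hm hp]]].
set i0 := Ordinal _ in hm hp.
have [q qP qlab] := hlabels (fun _ => false).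
have wn0 : w != 0.
  apply/eqP => e; move: hw; rewrite e /dot big1 => [|j _].
    by move/eqP; rewrite eq_sym oner_eq0.
  by rewrite mxE mul0r.
pose r i := if val i == 0%N then u else v i.
pose cc i := if val i == 0%N then c0 else c i.
pose sg i : R := if val i == 0%N then 1 else if dot (v i) q < c i then 1 else -1.
pose h i p := sg i * (dot (r i) p - cc i).
pose M := \matrix_(i, j) r i 0 j.
have Mw : M *m w^T = 0.
  apply/matrixP => i j; rewrite !mxE.
  transitivity (dot (r i) w).
    rewrite /dot; apply: eq_bigr => l _; by rewrite /M !mxE (ord1 j).
  rewrite /r; case: eqP => [//|inz].
  by rewrite dotC hwv // lt0n; apply/eqP.
have wTn0 : w^T != 0.
  by apply: contra wn0 => /eqP e; rewrite -[w]trmxK e trmx0.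
have [x xn0 xM] := @dep _ _ _ _ wTn0 Mw.
have ident : forall p, \sum_i x 0 i * dot (r i) p = 0.
  move=> p.
  have E : (x *m (M *m p^T)) 0 0 = 0 by rewrite mulmxA xM mul0mx mxE.
  rewrite -[RHS]E mxE; apply: eq_bigr => i _; rewrite mxE /dot; congr (_ * _).
  by apply: eq_bigr => j _; rewrite /M !mxE.
have key : forall i p, p \in P ->
    (a i p = 1 -> 0 < h i p) /\ (a i p = -1 -> h i p < 0).
  move=> i p pP; rewrite /h /sg /r /cc; case: eqP => [iv|inz].
    have ei : i = i0 by apply/val_inj.
    rewrite ei mul1r; split => e.
      rewrite subr_gt0 -(@dot_proj _ _ u w p uw); apply: hp; apply: map_f.
      by rewrite mem_filter e eqxx pP.
    rewrite subr_lt0 -(@dot_proj _ _ u w p uw); apply: hm; apply: map_f.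
    by rewrite mem_filter e eqxx pP.
  have i0lt : (0 < i)%N by rewrite lt0n; apply/eqP.
  have qm : q \in Pminus a P i by rewrite mem_filter qlab /= ?eqxx qP.
  have [_ [[hl hr]|[hl hr]]] := hH i i0lt.
    rewrite (hl q qm) mul1r; split => e.
      by rewrite subr_gt0; apply: hr; rewrite mem_filter e eqxx pP.
    by rewrite subr_lt0; apply: hl; rewrite mem_filter e eqxx pP.
  have -> : (dot (v i) q < c i) = false by rewrite ltNge (ltW (hl q qm)).
  rewrite mulN1r; split => e.
    by rewrite oppr_gt0 subr_lt0; apply: hr; rewrite mem_filter e eqxx pP.
  by rewrite oppr_lt0 subr_gt0; apply: hl; rewrite mem_filter e eqxx pP.
have ss : forall i, sg i * sg i = 1.
  by move=> i; rewrite /sg; case: ifP => _; [|case: ifP => _];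
    rewrite ?mulr1 ?mulrNN ?mulr1.
pose mu i := x 0 i * sg i.
have sumE : forall p, \sum_i mu i * h i p = - \sum_i x 0 i * cc i.
  move=> p.
  under eq_bigr do rewrite /mu /h mulrA -(mulrA (x 0 _)) ss mulr1 mulrBr.
  by rewrite sumrB ident sub0r.
have : ~~ [forall j, x 0 j == 0].
  apply: contra xn0 => /forallP H; apply/eqP/matrixP => a' b.
  by rewrite ord1 mxE; exact/eqP.
rewrite negb_forall => /existsP [j xj].
have muj : mu j != 0.
  apply: contra xj => /eqP e; apply/eqP.
  by rewrite -[x 0 j]mulr1 -(ss j) mulrA -/(mu j) e mul0r.
have [p1 p1P lab1] := hlabels (fun i => 0 <= mu i).
have [p2 p2P lab2] := hlabels (fun i => ~~ (0 <= mu i)).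
have pos1 : 0 < \sum_i mu i * h i p1.
  have C1 : forall i, (0 <= mu i -> 0 < h i p1) /\ (mu i < 0 -> h i p1 < 0).
    move=> i; have [k1 k2] := key i p1 p1P; split => hm0.
      by apply: k1; rewrite lab1 /= hm0.
    by apply: k2; rewrite lab1 /= leNgt hm0.
  apply: (@sum_pos _ _ _ j) => [i|].
    by have [C C'] := C1 i; exact: pt0.
  by have [C C'] := C1 j; exact: pt.
have pos2 : 0 < \sum_i mu i * - h i p2.
  have C1 : forall i, (0 <= mu i -> 0 < - h i p2) /\ (mu i < 0 -> - h i p2 < 0).
    move=> i; have [k1 k2] := key i p2 p2P; split => hm0.
      by rewrite oppr_gt0; apply: k2; rewrite lab2 /= hm0.
    by rewrite oppr_lt0; apply: k1; rewrite lab2 /= leNgt hm0.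
  apply: (@sum_pos _ _ _ j) => [i|].
    by have [C C'] := C1 i; exact: pt0.
  by have [C C'] := C1 j; exact: pt.
move: pos2; under eq_bigr do rewrite mulrN.
rewrite sumrN sumE opprK => pos2.
move: pos1; rewrite sumE oppr_gt0 => pos1.
by move: (lt_trans pos1 pos2); rewrite ltxx.
Qed.
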